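(* Let $M$ be a combinatorial $3$-pseudomanifold with vertex set $V=V_1\dot\cup V_2$, let $S_{(V_1,V_2)}$ be the associated slicing, and for $x\in V_1$ and $a\in V_2$ let $C^x$ and $C_a$ denote the traces of $x$ and $a$ on $S_{(V_1,V_2)}$. Then: (i) if $x,y\in V_1$ with $x\neq y$, then $C^x\cap C^y=\emptyset$; (ii) if $x\in V_1$ and $a\in V_2$, then $C^x\cap C_a=\left\langle\binom{x}{a}\right\rangle$ if $\langle x,a\rangle$ is an edge of $M$, and $C^x\cap C_a=\emptyset$ otherwise.
   Context: A combinatorial $3$-pseudomanifold is a finite pure $3$-dimensional simplicial complex in which the link of every vertex is a combinatorial surface. A function $f:M\to\mathbb{R}$ is regular simplexwise linear (rsl) if it is linear on every simplex and takes pairwise distinct values on the vertices. Given a partition $V=V_1\dot\cup V_2$ of the vertex set into nonempty sets, choose an rsl-function $f$ with $f(v)<f(w)$ for all $v\in V_1$, $w\in V_2$ and $x_0$ strictly between $\max f(V_1)$ and $\min f(V_2)$; the slicing $S_{(V_1,V_2)}$ is the polyhedral complex $f^{-1}(x_0)$ (made of triangles and quadrilaterals). Each vertex of $S_{(V_1,V_2)}$ is the intersection point of $f^{-1}(x_0)$ with an edge $\langle u,w\rangle$ of $M$ with $u\in V_1$, $w\in V_2$, and is denoted $\binom{u}{w}$. For $x\in V_1$ define $C^x_2$ as the set of faces of $S_{(V_1,V_2)}$ of the form $\langle\binom{x}{a},\binom{x}{b},\binom{x}{c}\rangle$ with $a,b,c\in V_2$, and $C^x_1$ as the set of faces of $S_{(V_1,V_2)}$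 not in $C^x_2$ of the form $\langle\binom{x}{a},\binom{x}{b}\rangle$ with $a,b\in V_2$; the trace of $x$ is $C^x:=\overline{C^x_2\cup C^x_1}$ (the closure, i.e. the subcomplex generated). Analogously, for $a\in V_2$, $C_a$ is the closure of the set of triangles $\langle\binom{x}{a},\binom{y}{a},\binom{z}{a}\rangle$ and edges $\langle\binom{x}{a},\binom{y}{a}\rangle$ ($x,y,z\in V_1$) of $S_{(V_1,V_2)}$.
   Formalization: The traces $C^x$ and $C_a$ are also generated by every vertex $\binom{x}{a}$ (respectively $\binom{y}{a}$) of $S_{(V_1,V_2)}$ that is not already a face of the closure of their defining triangles and edges. The statement above fails without it. *)

(* Defs.v *)
From mathcomp Require Import all_boot.
Set Implicit Arguments. Unset Strict Implicit. Unset Printing Implicit Defensive.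

Section Complexes.
Variable T : finType.

Definition simplicial_complex (K : {set {set T}}) : Prop :=
  forall s, s \in K -> s != set0 /\
    forall t : {set T}, t \subset s -> t != set0 -> t \in K.

Definition vertices (K : {set {set T}}) : {set T} := \bigcup_(s in K) s.

Definition pure_dim (K : {set {set T}}) (d : nat) : Prop :=
  K != set0 /\
  forall s, s \in K -> #|s| <= d.+1 /\ exists2 t, t \in K & (s \subset t) && (#|t| == d.+1).

Definition link (K : {set {set T}}) (v : T) : {set {set T}} :=
  [set t in K | (v \notin t) && ((v |: t) \in K)].

Definition adj (K : {set {set T}}) : rel T :=
  fun u w => (u != w) && ([set u; w] \in K).

Definition connected_complex (K : {set {set T}}) : Prop :=
  forall u w, u \in vertices K -> w \in vertices K -> connect (adj K) u w.

Definition cycle_complex (L : {set {set T}}) : Prop :=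
  [/\ simplicial_complex L, pure_dim L 1, connected_complex L &
      forall v, v \in vertices L -> #|[set w | adj L v w]| = 2].

Definition combinatorial_surface (L : {set {set T}}) : Prop :=
  [/\ simplicial_complex L, pure_dim L 2, connected_complex L &
      forall v, v \in vertices L -> cycle_complex (link L v)].

Definition pseudomanifold3 (K : {set {set T}}) : Prop :=
  [/\ simplicial_complex K, pure_dim K 3 &
      forall v, v \in vertices K -> combinatorial_surface (link K v)].

(* ---- Slicings ----
   The vertex binom(u,w) of the slicing is encoded by the pair (u, w).
   For an rsl-function f separating V1 from V2, the face sigma /\ f^-1(x0)
   of the slicing has vertex set (sigma /\ V1) x (sigma /\ V2); it is
   nonempty iff sigma meets both V1 and V2.  A face of the slicing is
   identified with its vertex set. *)
Definition slice_face (V1 V2 s : {set T}) : {set T * T} :=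
  setX (s :&: V1) (s :&: V2).

Definition slicing (K : {set {set T}}) (V1 V2 : {set T}) : {set {set T * T}} :=
  [set slice_face V1 V2 s | s in K & (s :&: V1 != set0) && (s :&: V2 != set0)].

(* In the slicing,
   G is a face of F iff the vertex set of G is contained in that of F. *)
Definition sclosure (K : {set {set T}}) (V1 V2 : {set T})
    (C : {set {set T * T}}) : {set {set T * T}} :=
  [set G in slicing K V1 V2 | [exists F in C, G \subset F]].

Definition traceV1_2 K V1 V2 (x : T) : {set {set T * T}} :=
  [set F in slicing K V1 V2 | [exists a in V2, exists b in V2, exists c in V2,
     [&& a != b, b != c, a != c & F == [set (x, a); (x, b); (x, c)]]]].

Definition traceV1_1 K V1 V2 (x : T) : {set {set T * T}} :=
  [set F in slicing K V1 V2 | (F \notin traceV1_2 K V1 V2 x) &&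
     [exists a in V2, exists b in V2, (a != b) && (F == [set (x, a); (x, b)])]].

(* C^x_0: vertices binom(x,a) of S not already lying in a face of
   C^x_2 \cup C^x_1 (needed for (ii) to hold) *)
Definition traceV1_0 K V1 V2 (x : T) : {set {set T * T}} :=
  [set F in slicing K V1 V2 |
     (F \notin sclosure K V1 V2 (traceV1_2 K V1 V2 x :|: traceV1_1 K V1 V2 x)) &&
     [exists a in V2, F == [set (x, a)]]].

Definition traceV1 K V1 V2 (x : T) : {set {set T * T}} :=
  sclosure K V1 V2
    (traceV1_2 K V1 V2 x :|: traceV1_1 K V1 V2 x :|: traceV1_0 K V1 V2 x).

Definition traceV2_2 K V1 V2 (a : T) : {set {set T * T}} :=
  [set F in slicing K V1 V2 | [exists x in V1, exists y in V1, exists z in V1,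
     [&& x != y, y != z, x != z & F == [set (x, a); (y, a); (z, a)]]]].

Definition traceV2_1 K V1 V2 (a : T) : {set {set T * T}} :=
  [set F in slicing K V1 V2 | (F \notin traceV2_2 K V1 V2 a) &&
     [exists x in V1, exists y in V1, (x != y) && (F == [set (x, a); (y, a)])]].

Definition traceV2_0 K V1 V2 (a : T) : {set {set T * T}} :=
  [set F in slicing K V1 V2 |
     (F \notin sclosure K V1 V2 (traceV2_2 K V1 V2 a :|: traceV2_1 K V1 V2 a)) &&
     [exists x in V1, F == [set (x, a)]]].

Definition traceV2 K V1 V2 (a : T) : {set {set T * T}} :=
  sclosure K V1 V2
    (traceV2_2 K V1 V2 a :|: traceV2_1 K V1 V2 a :|: traceV2_0 K V1 V2 a).

End Complexes.

(* Main.v *)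
Require Import Defs.
From mathcomp Require Import all_boot.
Set Implicit Arguments. Unset Strict Implicit. Unset Printing Implicit Defensive.

Lemma gen1 (T : finType) (K : {set {set T}}) V1 V2 x F :
  F \in traceV1_2 K V1 V2 x :|: traceV1_1 K V1 V2 x :|: traceV1_0 K V1 V2 x ->
  forall p, p \in F -> p.1 = x.
Proof.
rewrite !inE => /orP[/orP[]|].
- case/andP=> _ /existsP[a /andP[_ /existsP[b /andP[_ /existsP[c /andP[_ H]]]]]].
  case/and4P: H => _ _ _ /eqP-> p; rewrite !inE.
  by case/orP=> [/orP[]|] /eqP->.
- case/andP=> _ /andP[_ /existsP[a /andP[_ /existsP[b /andP[_ /andP[_ /eqP->]]]]]] p.
  by rewrite !inE; case/orP=> /eqP->.
- case/andP=> _ /andP[_ /existsP[a /andP[_ /eqP->]]] p.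
  by rewrite !inE => /eqP->.
Qed.

Lemma gen2 (T : finType) (K : {set {set T}}) V1 V2 a F :
  F \in traceV2_2 K V1 V2 a :|: traceV2_1 K V1 V2 a :|: traceV2_0 K V1 V2 a ->
  forall p, p \in F -> p.2 = a.
Proof.
rewrite !inE => /orP[/orP[]|].
- case/andP=> _ /existsP[x /andP[_ /existsP[y /andP[_ /existsP[z /andP[_ H]]]]]].
  case/and4P: H => _ _ _ /eqP-> p; rewrite !inE.
  by case/orP=> [/orP[]|] /eqP->.
- case/andP=> _ /andP[_ /existsP[x /andP[_ /existsP[y /andP[_ /andP[_ /eqP->]]]]]] p.
  by rewrite !inE; case/orP=> /eqP->.
- case/andP=> _ /andP[_ /existsP[x /andP[_ /eqP->]]] p.
  by rewrite !inE => /eqP->.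
Qed.

Lemma tr1 (T : finType) (K : {set {set T}}) V1 V2 x G :
  G \in traceV1 K V1 V2 x -> G \in slicing K V1 V2 /\ forall p, p \in G -> p.1 = x.
Proof.
rewrite inE => /andP[GS /existsP[F /andP[FC GF]]]; split=> // p pG.
exact: (gen1 FC) (subsetP GF p pG).
Qed.

Lemma tr2 (T : finType) (K : {set {set T}}) V1 V2 a G :
  G \in traceV2 K V1 V2 a -> G \in slicing K V1 V2 /\ forall p, p \in G -> p.2 = a.
Proof.
rewrite inE => /andP[GS /existsP[F /andP[FC GF]]]; split=> // p pG.
exact: (gen2 FC) (subsetP GF p pG).
Qed.

Lemma slice_ne (T : finType) (K : {set {set T}}) V1 V2 G :
  G \in slicing K V1 V2 -> exists s, [/\ s \in K, G = slice_face V1 V2 s & exists p, p \in G].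
Proof.
case/imsetP=> s; rewrite inE => /andP[sK /andP[/set0Pn[u uV1] /set0Pn[w wV2]]] ->.
exists s; split=> //; exists (u, w); by rewrite /slice_face in_setX uV1 wV2.
Qed.

Theorem lemma3p5 (T : finType) (K : {set {set T}}) (V1 V2 : {set T}) :
  pseudomanifold3 K ->
  V1 :&: V2 = set0 -> V1 :|: V2 = vertices K ->
  V1 != set0 -> V2 != set0 ->
  (forall x y, x \in V1 -> y \in V1 -> x != y ->
     traceV1 K V1 V2 x :&: traceV1 K V1 V2 y = set0) /\
  (forall x a, x \in V1 -> a \in V2 ->
     traceV1 K V1 V2 x :&: traceV2 K V1 V2 a =
       if [set x; a] \in K then [set [set (x, a)]] else set0).
Proof.
case=> scK _ _ dis _ _ _; split.
  move=> x y _ _ nxy; apply/setP=> G; rewrite in_setI in_set0.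
  apply/negP=> /andP[/tr1[GS Hx] /tr1[_ Hy]].
  have [s [_ _ [p pG]]] := slice_ne GS.
  by move: nxy; rewrite -(Hx p pG) (Hy p pG) eqxx.
move=> x a xV1 aV2.
have xV2 : x \notin V2.
  by apply/negP=> xV2; move/setP: dis => /(_ x); rewrite !inE xV1 xV2.
have aV1 : a \notin V1.
  by apply/negP=> aV1; move/setP: dis => /(_ a); rewrite !inE aV1 aV2.
have sfe : slice_face V1 V2 [set x; a] = [set (x, a)].
  apply/setP=> [[u w]]; rewrite /slice_face in_setX !inE.
  rewrite xpair_eqE; apply/idP/idP.
    case/and3P=> /andP[/orP[/eqP->|/eqP->] uV] /orP[/eqP->|/eqP->] wV;
      rewrite ?eqxx //; by rewrite ?(negbTE xV2) ?(negbTE aV1) in uV wV.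
  by case/andP=> /eqP-> /eqP->; rewrite !eqxx xV1 aV2 orbT.
apply/setP=> G; rewrite in_setI.
apply/idP/idP.
  case/andP=> /tr1[GS Hx] /tr2[_ Ha].
  have [s [sK Gs [p pG]]] := slice_ne GS.
  have Gxa : G = [set (x, a)].
    apply/setP=> q; rewrite inE; apply/idP/idP.
      by move=> qG; rewrite -(Hx q qG) -(Ha q qG) -surjective_pairing.
    move/eqP->; by rewrite -(Hx p pG) -(Ha p pG) -surjective_pairing.
  have xas : (x, a) \in slice_face V1 V2 s by rewrite -Gs Gxa set11.
  move: xas; rewrite /slice_face in_setX !inE => /andP[/andP[xs _] /andP[as_ _]].
  have -> : [set x; a] \in K.
    have [_ ] := scK s sK; apply.
      by apply/subsetP=> z; rewrite !inE => /orP[]/eqP->.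
    by apply/set0Pn; exists x; rewrite !inE eqxx.
  by rewrite Gxa inE.
case: ifP => xaK; last by rewrite in_set0.
rewrite inE => /eqP->.
have S : [set (x, a)] \in slicing K V1 V2.
  apply/imsetP; exists [set x; a] => //; rewrite inE xaK /=.
  apply/andP; split; apply/set0Pn; [exists x|exists a]; by rewrite !inE eqxx ?xV1 ?aV2 ?orbT.
apply/andP; split; rewrite inE S /=; apply/existsP.
  case C: ([set (x, a)] \in sclosure K V1 V2 (traceV1_2 K V1 V2 x :|: traceV1_1 K V1 V2 x)).
    move: C; rewrite inE S /= => /existsP[F /andP[FC sub]]; exists F.
    by rewrite sub andbT inE FC.
  exists [set (x, a)]; rewrite subxx andbT in_setU; apply/orP; right; rewrite /traceV1_0 in_set S C /=.
  by apply/existsP; exists a; rewrite aV2 eqxx.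
  
case C: ([set (x, a)] \in sclosure K V1 V2 (traceV2_2 K V1 V2 a :|: traceV2_1 K V1 V2 a)).
  move: C; rewrite inE S /= => /existsP[F /andP[FC sub]]; exists F.
  by rewrite sub andbT inE FC.
exists [set (x, a)]; rewrite subxx andbT in_setU; apply/orP; right; rewrite /traceV2_0 in_set S C /=.
by apply/existsP; exists x; rewrite xV1 eqxx.

Qed.
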